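(* The Open CbNeed reduction $\to_{\mathrm{ond}}$ on programs is deterministic: if $p\to_{\mathrm{ond}} q$ and $p\to_{\mathrm{ond}} q'$ then $q=q'$ (up to $\alpha$-renaming).
   Context: Syntax (split presentation). Terms: $t,u,s ::= x \mid \lambda x.t \mid t\,u$. Values: $v ::= \lambda x.t$ (variables are not values). Environments: $E ::= \epsilon \mid E[x\leftarrow t]$. Programs: $p ::= (t,E)$. In $E[x\leftarrow t]$ and $(u,E[x\leftarrow t])$ the variable $x$ is bound in $E$ and $u$; everything is up to $\alpha$-renaming, appended ES bind fresh variables. Appending: $(t,E)@[x\leftarrow u] := (t,E[x\leftarrow u])$. Inert terms and fireballs: $i ::= x \mid i\,f$, $f ::= v \mid i$. Open term evaluation contexts: $\mathcal{H} ::= \langle\cdot\rangle \mid \mathcal{H}\,t \mid i\,\mathcal{H}$. Term contexts: $C ::= \langle\cdot\rangle \mid C\,t \mid t\,C$. Environment contexts: $G ::= E[x\leftarrow C] \mid G[x\leftarrow u]$. Program contexts: $P ::= (C,E) \mid (t,G)$, with $(C,E)@[x\leftarrow u] := (C,E[x\leftarrow u])$, $(t,G)@[x\leftarrow u] := (t,G[x\leftarrow u])$. Plugging: $(C,E)\langle (t,E')\rangle := (C\langle t\rangle, E'E)$; $(u,E[x\leftarrow C])\langle (t,E')\rangle := (u, E[x\leftarrow C\langle t\rangle]E')$; $(u,G[x\leftarrow s])\langle (t,E)\rangle := ((u,G)\langle(t,E)\rangle)@[x\leftarrow s]$; $P\langle t\rangle := P\langle (t,\epsilon)\rangle$. For $p=(t,E)$,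 $p@[x\leftarrow\mathcal{H}]$ denotes the program context $(t,E[x\leftarrow\mathcal{H}])$. Look-up $P(x)$: $P(x)=t$ if the list of ES of $P$ contains $[x\leftarrow t]$ with $t$ a term, and $P(x)=\bot$ otherwise. $v^{\alpha}$ denotes a copy of $v$ with bound variables renamed to fresh ones. Needed variables: $nv(x)=\{x\}$, $nv(\lambda x.t)=\emptyset$, $nv(t\,u)=nv(t)\cup nv(u)$; $nv((t,\epsilon))=nv(t)$, $nv((t,E[x\leftarrow u]))=nv((t,E))$ if $x\notin nv((t,E))$, else $(nv((t,E))\setminus\{x\})\cup nv(u)$; $nv(\langle\cdot\rangle)=\emptyset$, $nv(\mathcal{H}\,t)=nv(\mathcal{H})$, $nv(i\,\mathcal{H})=nv(i)\cup nv(\mathcal{H})$. Open evaluation contexts $P\in\mathcal{E}_{{\mathcal{V}}}$, inductively: $(\mathcal{H},\epsilon)\in\mathcal{E}_{nv(\mathcal{H})}$; if $P\in\mathcal{E}_{{\mathcal{V}}}$, $x\in{\mathcal{V}}$, $i$ inert then $P@[x\leftarrow i]\in\mathcal{E}_{({\mathcal{V}}\setminus\{x\})\cup nv(i)}$; if $P\in\mathcal{E}_{{\mathcal{V}}}$, $x\notin{\mathcal{V}}$ then $P@[x\leftarrow t]\in\mathcal{E}_{{\mathcal{V}}}$; if $P\in\mathcal{E}_{{\mathcal{V}}}$, $x\notin{\mathcal{V}}$ then $P\langle x\rangle@[x\leftarrow\mathcal{H}]\in\mathcal{E}_{{\mathcal{V}}\cup nv(\mathcal{H})}$ ($x$ not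 in the domain of $P$). Open CbNeed rules, for $P\in\mathcal{E}_{{\mathcal{V}}}$ for some ${\mathcal{V}}$: $P\langle(\lambda x.t)u\rangle \to_{\mathrm{om}} P\langle (t,[x\leftarrow u])\rangle$; $P\langle x\rangle\to_{\mathrm{oe}} P\langle v^{\alpha}\rangle$ if $P(x)=v$. $\to_{\mathrm{ond}} := \to_{\mathrm{om}}\cup\to_{\mathrm{oe}}$. *)

(* Defs.v *)
From Stdlib Require Import List Arith.
Import ListNotations.

Definition var := nat.

Inductive term : Type :=
| Var : var -> term
| Lam : var -> term -> term
| App : term -> term -> term.

Inductive env : Type :=
| Eps : env
| ESnoc : env -> var -> term -> env.

Definition prog : Type := (term * env)%type.

(* Concatenation E' E (E' innermost, E outermost). *)
Fixpoint env_cat (E' E : env) : env :=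
  match E with
  | Eps => E'
  | ESnoc E0 x t => ESnoc (env_cat E' E0) x t
  end.

Definition is_value (t : term) : Prop :=
  match t with Lam _ _ => True | _ => False end.

Inductive inert : term -> Prop :=
| inert_var : forall x, inert (Var x)
| inert_app : forall i f, inert i -> fireball f -> inert (App i f)
with fireball : term -> Prop :=
| fb_value : forall v, is_value v -> fireball v
| fb_inert : forall i, inert i -> fireball i.

Inductive tctx : Type :=
| Hole : tctx
| CAppL : tctx -> term -> tctx
| CAppR : term -> tctx -> tctx.

Fixpoint plug_t (C : tctx) (t : term) : term :=
  match C with
  | Hole => t
  | CAppL C0 u => App (plug_t C0 t) u
  | CAppR u C0 => App u (plug_t C0 t)
  end.

Inductive is_H : tctx -> Prop :=
| isH_hole : is_H Hole
| isH_appl : forall H t, is_H H -> is_H (CAppL H t)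
| isH_appr : forall i H, inert i -> is_H H -> is_H (CAppR i H).

Inductive gctx : Type :=
| GHere : env -> var -> tctx -> gctx
| GSnoc : gctx -> var -> term -> gctx.

Inductive pctx : Type :=
| PTerm : tctx -> env -> pctx
| PEnv : term -> gctx -> pctx.

Definition prog_app (p : prog) (x : var) (u : term) : prog :=
  (fst p, ESnoc (snd p) x u).

Definition pctx_app (P : pctx) (x : var) (u : term) : pctx :=
  match P with
  | PTerm C E => PTerm C (ESnoc E x u)
  | PEnv t G => PEnv t (GSnoc G x u)
  end.

Definition prog_app_ctx (p : prog) (x : var) (H : tctx) : pctx :=
  PEnv (fst p) (GHere (snd p) x H).

Fixpoint plug_g (u : term) (G : gctx) (p : prog) : prog :=
  match G with
  | GHere E x C => (u, env_cat (ESnoc E x (plug_t C (fst p))) (snd p))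
  | GSnoc G0 x s => prog_app (plug_g u G0 p) x s
  end.

Definition plug (P : pctx) (p : prog) : prog :=
  match P with
  | PTerm C E => (plug_t C (fst p), env_cat (snd p) E)
  | PEnv u G => plug_g u G p
  end.

Definition plug_term (P : pctx) (t : term) : prog := plug P (t, Eps).

(* Explicit substitutions of a context whose content is a term
   (the ES containing the hole is excluded). *)
Fixpoint es_env (E : env) : list (var * term) :=
  match E with
  | Eps => []
  | ESnoc E0 x t => (x, t) :: es_env E0
  end.

Fixpoint es_g (G : gctx) : list (var * term) :=
  match G with
  | GHere E _ _ => es_env E
  | GSnoc G0 x u => (x, u) :: es_g G0
  end.

Definition es_pctx (P : pctx) : list (var * term) :=
  match P with
  | PTerm _ E => es_env E
  | PEnv _ G => es_g G
  end.

Definition lookup (P : pctx) (x : var) (t : term) : Prop :=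
  In (x, t) (es_pctx P).

(* Domain of a program context (all variables bound by its ES,
   including the one containing the hole). *)
Fixpoint dom_env (E : env) : list var :=
  match E with
  | Eps => []
  | ESnoc E0 x _ => x :: dom_env E0
  end.

Fixpoint dom_g (G : gctx) : list var :=
  match G with
  | GHere E x _ => x :: dom_env E
  | GSnoc G0 x _ => x :: dom_g G0
  end.

Definition dom_pctx (P : pctx) : list var :=
  match P with
  | PTerm _ E => dom_env E
  | PEnv _ G => dom_g G
  end.

Fixpoint nv_t (z : var) (t : term) : Prop :=
  match t with
  | Var x => z = x
  | Lam _ _ => False
  | App t1 t2 => nv_t z t1 \/ nv_t z t2
  end.

Fixpoint nv_env (z : var) (t : term) (E : env) : Prop :=
  match E with
  | Eps => nv_t z t
  | ESnoc E0 x u =>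
      (nv_env z t E0 /\ z <> x) \/ (nv_env x t E0 /\ nv_t z u)
  end.

Definition nv_prog (z : var) (p : prog) : Prop := nv_env z (fst p) (snd p).

Fixpoint nv_ctx (z : var) (C : tctx) : Prop :=
  match C with
  | Hole => False
  | CAppL C0 _ => nv_ctx z C0
  | CAppR i C0 => nv_t z i \/ nv_ctx z C0
  end.

(* Open evaluation contexts: evctx V P  means  P \in E_V. *)
Inductive evctx : (var -> Prop) -> pctx -> Prop :=
| ev_base : forall H, is_H H ->
    evctx (fun z => nv_ctx z H) (PTerm H Eps)
| ev_inert : forall V P x i, evctx V P -> V x -> inert i ->
    evctx (fun z => (V z /\ z <> x) \/ nv_t z i) (pctx_app P x i)
| ev_garbage : forall V P x t, evctx V P -> ~ V x ->
    evctx V (pctx_app P x t)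
| ev_hole : forall V P x H, evctx V P -> ~ V x -> ~ In x (dom_pctx P) ->
    is_H H ->
    evctx (fun z => V z \/ nv_ctx z H) (prog_app_ctx (plug_term P (Var x)) x H).

Fixpoint aeq_var (G : list (var * var)) (x y : var) : Prop :=
  match G with
  | [] => x = y
  | (a, b) :: G0 => (x = a /\ y = b) \/ (x <> a /\ y <> b /\ aeq_var G0 x y)
  end.

Fixpoint aeq (G : list (var * var)) (t t' : term) : Prop :=
  match t, t' with
  | Var x, Var y => aeq_var G x y
  | Lam x b, Lam y b' => aeq ((x, y) :: G) b b'
  | App t1 t2, App u1 u2 => aeq G t1 u1 /\ aeq G t2 u2
  | _, _ => False
  end.

(* In (t, E[x<-u]), x is bound in t and E, not in u. *)
Fixpoint aeq_env (G : list (var * var)) (t : term) (E : env)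
                 (t' : term) (E' : env) : Prop :=
  match E, E' with
  | Eps, Eps => aeq G t t'
  | ESnoc E0 x u, ESnoc E0' y u' =>
      aeq G u u' /\ aeq_env ((x, y) :: G) t E0 t' E0'
  | _, _ => False
  end.

Definition aeq_prog (p q : prog) : Prop :=
  aeq_env [] (fst p) (snd p) (fst q) (snd q).

Fixpoint bv_t (t : term) : list var :=
  match t with
  | Var _ => []
  | Lam x b => x :: bv_t b
  | App t1 t2 => bv_t t1 ++ bv_t t2
  end.

Fixpoint bv_env (E : env) : list var :=
  match E with
  | Eps => []
  | ESnoc E0 x u => x :: bv_t u ++ bv_env E0
  end.

Definition bv_prog (p : prog) : list var := bv_t (fst p) ++ bv_env (snd p).

Fixpoint fv_t (z : var) (t : term) : Prop :=
  match t with
  | Var x => z = x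
  | Lam x b => fv_t z b /\ z <> x
  | App t1 t2 => fv_t z t1 \/ fv_t z t2
  end.

Fixpoint fv_env (z : var) (t : term) (E : env) : Prop :=
  match E with
  | Eps => fv_t z t
  | ESnoc E0 x u => (fv_env z t E0 /\ z <> x) \/ fv_t z u
  end.

Definition fv_prog (z : var) (p : prog) : Prop := fv_env z (fst p) (snd p).

Definition well_named (p : prog) : Prop :=
  NoDup (bv_prog p) /\ (forall x, In x (bv_prog p) -> ~ fv_prog x p).

Inductive ond_raw : prog -> prog -> Prop :=
| om_step : forall V P x t u, evctx V P ->
    ond_raw (plug_term P (App (Lam x t) u)) (plug P (t, ESnoc Eps x u))
| oe_step : forall V P x v v', evctx V P -> lookup P x v -> is_value v ->
    aeq [] v v' ->  (* v' = v^alpha, a renamed copy of v *)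
    ond_raw (plug_term P (Var x)) (plug_term P v').

(* ->ond on programs up to alpha-renaming: fire a rule on a well-named
   alpha-representative. *)
Definition ond (p q : prog) : Prop :=
  exists p0 q0, aeq_prog p p0 /\ well_named p0 /\ ond_raw p0 q0 /\ aeq_prog q0 q.

(* Main.v *)
Require Import Defs.
From Stdlib Require Import List Arith Lia FunctionalExtensionality PropExtensionality.
Import ListNotations.

Lemma env_cat_Eps_l : forall E, env_cat Eps E = E.
Proof. induction E as [|E IH x u]; simpl; [reflexivity| rewrite IH; reflexivity]. Qed.

Lemma plug_term_app : forall P x u s,
  plug_term (pctx_app P x u) s = prog_app (plug_term P s) x u.
Proof. destruct P; reflexivity. Qed.

Lemma plug_term_hole : forall p x H s,
  plug_term (prog_app_ctx p x H) s = (fst p, ESnoc (snd p) x (plug_t H s)).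
Proof. reflexivity. Qed.

Lemma plug_term_base : forall H s, plug_term (PTerm H Eps) s = (plug_t H s, Eps).
Proof. reflexivity. Qed.

Lemma dom_plug_g : forall u G s, dom_env (snd (plug_g u G (s, Eps))) = dom_g G.
Proof.
  induction G; intros; simpl; [reflexivity|].
  rewrite IHG; reflexivity.
Qed.

Lemma dom_plug : forall P s, dom_env (snd (plug_term P s)) = dom_pctx P.
Proof.
  destruct P; simpl.
  - rewrite env_cat_Eps_l; reflexivity.
  - apply dom_plug_g.
Qed.

Lemma es_plug : forall P s x v, In (x,v) (es_pctx P) ->
  In (x,v) (es_env (snd (plug_term P s))).
Proof.
  destruct P as [C E|u G]; simpl; intros s x v H.
  - rewrite env_cat_Eps_l; exact H.
  - induction G; simpl in *.
    + right; exact H.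
    + unfold prog_app; simpl. destruct H as [H|H]; [left; exact H| right; auto].
Qed.

Lemma es_dom : forall E x v, In (x,v) (es_env E) -> In x (dom_env E).
Proof.
  induction E; simpl; intros; [contradiction|].
  destruct H as [H|H]; [inversion H; subst; left; reflexivity | right; eauto].
Qed.

Lemma dom_bv : forall E x, In x (dom_env E) -> In x (bv_env E).
Proof.
  induction E; simpl; intros; [contradiction|].
  destruct H as [H|H]; [left; assumption| right; apply in_or_app; right; auto].
Qed.

Lemma es_uniq : forall E x u1 u2, NoDup (bv_env E) ->
  In (x,u1) (es_env E) -> In (x,u2) (es_env E) -> u1 = u2.
Proof.
  induction E as [|E IH y w]; simpl; intros x u1 u2 ND H1 H2; [contradiction|].
  inversion ND as [|? ? Hn ND']; subst.
  assert (NDE : NoDup (bv_env E)) by (eapply NoDup_app_remove_l; eauto).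
  destruct H1 as [H1|H1], H2 as [H2|H2].
  - inversion H1; inversion H2; subst; reflexivity.
  - inversion H1; subst. exfalso; apply Hn; apply in_or_app; right; apply dom_bv; eapply es_dom; eauto.
  - inversion H2; subst. exfalso; apply Hn; apply in_or_app; right; apply dom_bv; eapply es_dom; eauto.
  - eauto.
Qed.

Lemma nodup_dom : forall E, NoDup (bv_env E) -> NoDup (dom_env E).
Proof.
  induction E as [|E IH y w]; simpl; intros ND; [constructor|].
  inversion ND as [|? ? Hn ND']; subst.
  constructor.
  - intro Hi; apply Hn; apply in_or_app; right; apply dom_bv; auto.
  - apply IH; eapply NoDup_app_remove_l; eauto.
Qed.

Lemma wn_nodup_env : forall p, well_named p -> NoDup (bv_env (snd p)).
Proof. intros p [ND _]; unfold bv_prog in ND; eapply NoDup_app_remove_l; eauto. Qed.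

Lemma wn_bound_not_free : forall p x v, well_named p ->
  In (x,v) (es_env (snd p)) -> ~ fv_prog x p.
Proof.
  intros p x v [ND Hf] Hin. apply Hf. unfold bv_prog. apply in_or_app; right.
  apply dom_bv; eapply es_dom; eauto.
Qed.

Lemma plug_fv1 : forall C a b w, fv_t w (plug_t C a) -> fv_t w (plug_t C b) \/ fv_t w a.
Proof.
  induction C; simpl; intros a b w H; auto.
  - destruct H as [H|H]; auto. destruct (IHC a b w H); auto.
  - destruct H as [H|H]; auto. destruct (IHC a b w H); auto.
Qed.

Lemma plug_fv2 : forall C a w, fv_t w a -> fv_t w (plug_t C a).
Proof. induction C; simpl; auto. Qed.

Lemma nv_fv_t : forall z t, nv_t z t -> fv_t z t.
Proof. induction t; simpl; intuition. Qed.

Lemma nv_ctx_fv : forall z C s, nv_ctx z C -> fv_t z (plug_t C s).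
Proof.
  induction C; simpl; intros s H; [contradiction| |].
  - left; auto.
  - destruct H as [H|H]; [left; apply nv_fv_t; auto| right; auto].
Qed.

Lemma fv_env_mono : forall (Q : var -> Prop) a b E z,
  (forall w, fv_t w a -> fv_t w b \/ Q w) -> fv_env z a E -> fv_env z b E \/ Q z.
Proof.
  induction E as [|E IH y u]; simpl; intros z Hab H; auto.
  destruct H as [[H Hn]|H]; auto.
  destruct (IH z Hab H); auto.
Qed.

Lemma fv_env_cat_mono : forall a b E1 E2 E z,
  (forall w, fv_env w a E1 -> fv_env w b E2) ->
  fv_env z a (env_cat E1 E) -> fv_env z b (env_cat E2 E).
Proof.
  induction E as [|E IH y u]; simpl; intros z Hab H; auto.
  destruct H as [[H Hn]|H]; auto.
Qed.

Lemma ev_fv : forall V P, evctx V P -> forall s z, V z -> fv_prog z (plug_term P s).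
Proof.
  induction 1; intros s z Hz.
  - rewrite plug_term_base. unfold fv_prog; simpl. apply nv_ctx_fv; auto.
  - rewrite plug_term_app. unfold fv_prog, prog_app; simpl.
    destruct Hz as [[Hz Hn]|Hz]; [left; split; auto; apply IHevctx; auto| right; apply nv_fv_t; auto].
  - rewrite plug_term_app. unfold fv_prog, prog_app; simpl.
    left; split; [apply IHevctx; auto| intro; subst; contradiction].
  - rewrite plug_term_hole. unfold fv_prog; simpl.
    destruct Hz as [Hz|Hz].
    + left; split; [apply (IHevctx (Var x)); auto| intro; subst; contradiction].
    + right; apply nv_ctx_fv; auto.
Qed.

Definition sw2 (p : var * var) : var * var := (snd p, fst p).

Lemma aeq_var_sym : forall G x y, aeq_var G x y -> aeq_var (map sw2 G) y x.
Proof.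
  induction G as [|[a b] G IH]; simpl; intros x y H; auto.
  destruct H as [[-> ->]|[H1 [H2 H3]]]; auto.
Qed.

Lemma aeq_sym : forall t G t', aeq G t t' -> aeq (map sw2 G) t' t.
Proof.
  induction t as [x|x b IH|a IHa b IHb]; intros G t' H; destruct t'; simpl in *; try contradiction.
  - apply aeq_var_sym; auto.
  - apply (IH ((x,v)::G)); auto.
  - destruct H; split; auto.
Qed.

Lemma aeq_env_sym : forall E t G t' E', aeq_env G t E t' E' -> aeq_env (map sw2 G) t' E' t E.
Proof.
  induction E as [|E IH y u]; intros t G t' E' H; destruct E' as [|E' y' u']; simpl in *; try contradiction.
  - apply aeq_sym; auto.
  - destruct H as [H1 H2]; split; [apply aeq_sym; auto| apply (IH t ((y,y')::G)); auto].
Qed.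

Lemma aeq_prog_sym : forall p q, aeq_prog p q -> aeq_prog q p.
Proof. intros p q H; unfold aeq_prog in *; apply (aeq_env_sym _ _ [] _ _ H). Qed.

Inductive chain : list (var*var) -> list (var*var) -> list (var*var) -> Prop :=
| ch_nil : chain [] [] []
| ch_cons : forall a b c G1 G2 G3, chain G1 G2 G3 ->
    chain ((a,b)::G1) ((b,c)::G2) ((a,c)::G3).

Lemma aeq_var_trans : forall G1 G2 G3, chain G1 G2 G3 ->
  forall x y z, aeq_var G1 x y -> aeq_var G2 y z -> aeq_var G3 x z.
Proof.
  induction 1; simpl; intros x y z H1 H2.
  - congruence.
  - destruct H1 as [[-> ->]|[H1a [H1b H1c]]], H2 as [[E1 ->]|[H2a [H2b H2c]]]; try tauto.
    right; split; [auto| split; eauto].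
Qed.

Lemma aeq_trans : forall t G1 G2 G3 t' t'', chain G1 G2 G3 ->
  aeq G1 t t' -> aeq G2 t' t'' -> aeq G3 t t''.
Proof.
  induction t as [x|x b IH|a IHa b IHb]; intros G1 G2 G3 t' t'' Hc H1 H2;
    destruct t' as [y|y b'|a' b']; destruct t'' as [z|z b''|a'' b'']; simpl in *; try contradiction.
  - eapply aeq_var_trans; eauto.
  - apply (IH ((x,y)::G1) ((y,z)::G2) ((x,z)::G3) b' b''); auto. constructor; auto.
  - destruct H1, H2; split; eauto.
Qed.

Lemma aeq_env_trans : forall E t G1 G2 G3 t' E' t'' E'', chain G1 G2 G3 ->
  aeq_env G1 t E t' E' -> aeq_env G2 t' E' t'' E'' -> aeq_env G3 t E t'' E''.
Proof.
  induction E as [|E IH x u]; intros t G1 G2 G3 t' E' t'' E'' Hc H1 H2;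
    destruct E' as [|E' y u']; destruct E'' as [|E'' z u'']; simpl in *; try contradiction.
  - eapply aeq_trans; eauto.
  - destruct H1, H2; split; [eapply aeq_trans; eauto|].
    apply (IH t ((x,y)::G1) ((y,z)::G2) ((x,z)::G3) t' E' t'' E''); auto. constructor; auto.
Qed.

Lemma aeq_prog_trans : forall p q r, aeq_prog p q -> aeq_prog q r -> aeq_prog p r.
Proof. intros p q r H1 H2; unfold aeq_prog in *; eapply aeq_env_trans; eauto; constructor. Qed.

Definition idG (G : list (var*var)) : Prop := Forall (fun p => fst p = snd p) G.

Lemma aeq_var_refl : forall G x, idG G -> aeq_var G x x.
Proof.
  induction G as [|[a b] G IH]; simpl; intros x HG; auto.
  inversion HG; subst; simpl in *; subst.
  destruct (Nat.eq_dec x b); [left; auto| right; auto].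
Qed.

Lemma aeq_refl : forall t G, idG G -> aeq G t t.
Proof.
  induction t as [x|x b IH|a IHa b IHb]; intros G HG; simpl.
  - apply aeq_var_refl; auto.
  - apply IH; constructor; auto.
  - split; auto.
Qed.

Lemma aeq_env_refl : forall E t G, idG G -> aeq_env G t E t E.
Proof.
  induction E as [|E IH x u]; intros t G HG; simpl.
  - apply aeq_refl; auto.
  - split; [apply aeq_refl; auto| apply IH; constructor; auto].
Qed.

Lemma aeq_prog_refl : forall p, aeq_prog p p.
Proof. intros; unfold aeq_prog; apply aeq_env_refl; constructor. Qed.

Lemma aeq_var_ext : forall G H x y, idG G -> aeq_var H x y -> aeq_var (H ++ G) x y.
Proof.
  induction H as [|[a b] H IH]; simpl; intros x y HG Hv.
  - subst; apply aeq_var_refl; auto.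
  - destruct Hv as [Hv|[? [? Hv]]]; auto.
Qed.

Lemma aeq_ext : forall t G H t', idG G -> aeq H t t' -> aeq (H ++ G) t t'.
Proof.
  induction t as [x|x b IH|a IHa b IHb]; intros G H t' HG Ha; destruct t'; simpl in *; try contradiction.
  - apply aeq_var_ext; auto.
  - apply (IH G ((x,v)::H)); auto.
  - destruct Ha; split; auto.
Qed.

Lemma aeq_closed_id : forall G a b, idG G -> aeq [] a b -> aeq G a b.
Proof. intros G a b HG H; apply (aeq_ext a G [] b HG H). Qed.

Lemma aeq_plug : forall C G a b, idG G -> aeq G a b -> aeq G (plug_t C a) (plug_t C b).
Proof.
  induction C; simpl; intros G a b HG H; auto.
  - split; auto; apply aeq_refl; auto.
  - split; auto; apply aeq_refl; auto.
Qed.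

Lemma aeq_plug_term : forall P a b, aeq [] a b -> aeq_prog (plug_term P a) (plug_term P b).
Proof.
  intros [C E|u G] a b H; unfold aeq_prog, plug_term; simpl.
  - rewrite env_cat_Eps_l.
    assert (K : forall GG, idG GG -> aeq_env GG (plug_t C a) E (plug_t C b) E).
    { induction E as [|E IH x w]; intros GG HG; simpl.
      - apply aeq_plug; auto; apply aeq_closed_id; auto.
      - split; [apply aeq_refl; auto| apply IH; constructor; auto]. }
    apply K; constructor.
  - assert (K : forall GG, idG GG -> aeq_env GG (fst (plug_g u G (a,Eps))) (snd (plug_g u G (a,Eps)))
                                         (fst (plug_g u G (b,Eps))) (snd (plug_g u G (b,Eps)))).
    { induction G as [E y C|G IH y w]; intros GG HG; simpl.
      - split; [apply aeq_plug; auto; apply aeq_closed_id; auto| apply aeq_env_refl; constructor; auto].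
      - split; [apply aeq_refl; auto| apply IH; constructor; auto]. }
    apply K; constructor.
Qed.

Lemma aeq_var_free : forall G z y, aeq_var G z y -> ~ In z (map fst G) -> y = z /\ ~ In z (map snd G).
Proof.
  induction G as [|[a b] G IH]; simpl; intros z y H Hn.
  - subst; auto.
  - destruct H as [[-> ->]|[H1 [H2 H3]]]; [exfalso; apply Hn; left; auto|].
    destruct (IH z y H3) as [-> Hs]; [intro; apply Hn; right; auto|].
    split; auto. intros [E|E]; [subst; apply H2; auto| auto].
Qed.

Lemma aeq_fv : forall t G t' z, aeq G t t' -> fv_t z t -> ~ In z (map fst G) ->
  fv_t z t' /\ ~ In z (map snd G).
Proof.
  induction t as [x|x b IH|a IHa b IHb]; intros G t' z H Hz Hn; destruct t' as [y|y b'|a' b']; simpl in *; try contradiction.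
  - subst. destruct (aeq_var_free G x y H Hn) as [-> Hs]; auto.
  - destruct Hz as [Hz Hzx].
    destruct (IH ((x,y)::G) b' z H Hz) as [H1 H2].
    + simpl; intros [E|E]; [congruence| auto].
    + simpl in H2. split; [split; auto| auto].
  - destruct H as [H1 H2]. destruct Hz as [Hz|Hz].
    + destruct (IHa G a' z H1 Hz Hn); auto.
    + destruct (IHb G b' z H2 Hz Hn); auto.
Qed.

Lemma aeq_env_fv : forall E t G t' E' z, aeq_env G t E t' E' -> fv_env z t E -> ~ In z (map fst G) ->
  fv_env z t' E' /\ ~ In z (map snd G).
Proof.
  induction E as [|E IH x u]; intros t G t' E' z H Hz Hn; destruct E' as [|E' y u']; simpl in *; try contradiction.
  - eapply aeq_fv; eauto.
  - destruct H as [H1 H2]. destruct Hz as [[Hz Hzx]|Hz].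
    + destruct (IH t ((x,y)::G) t' E' z H2 Hz) as [K1 K2].
      * simpl; intros [E0|E0]; [congruence| auto].
      * simpl in K2. split; [left; split; auto| auto].
    + destruct (aeq_fv u G u' z H1 Hz Hn); auto.
Qed.

Lemma aeq_prog_fv : forall p q z, aeq_prog p q -> fv_prog z p -> fv_prog z q.
Proof. intros p q z H Hz. unfold aeq_prog, fv_prog in *. eapply aeq_env_fv; eauto. Qed.

Lemma aeq_closed_fv : forall a b z, aeq [] a b -> fv_t z b -> fv_t z a.
Proof. intros a b z H Hz. apply aeq_sym in H. simpl in H. eapply aeq_fv in H; eauto. apply H. Qed.

Lemma aeq_len : forall t G t', aeq G t t' -> length (bv_t t) = length (bv_t t').
Proof.
  induction t as [x|x b IH|a IHa b IHb]; intros G t' H; destruct t'; simpl in *; try contradiction; auto.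
  - f_equal; eauto.
  - destruct H; rewrite !length_app; f_equal; eauto.
Qed.

Lemma aeq_env_len : forall E t G t' E', aeq_env G t E t' E' ->
  length (bv_t t) = length (bv_t t') /\ length (bv_env E) = length (bv_env E').
Proof.
  induction E as [|E IH x u]; intros t G t' E' H; destruct E'; simpl in *; try contradiction.
  - split; eauto using aeq_len.
  - destruct H as [H1 H2]. destruct (IH _ _ _ _ H2) as [K1 K2]. split; auto.
    rewrite !length_app. f_equal. f_equal; eauto using aeq_len.
Qed.

Lemma aeq_prog_len : forall p q, aeq_prog p q -> length (bv_prog p) = length (bv_prog q).
Proof.
  intros p q H; unfold aeq_prog, bv_prog in *. destruct (aeq_env_len _ _ _ _ _ H).
  rewrite !length_app; auto.
Qed.

Definition atom (s : term) : Prop :=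
  (exists x, s = Var x) \/ (exists y b u, s = App (Lam y b) u).

Lemma atom_plug_not_value : forall C s, atom s -> ~ is_value (plug_t C s).
Proof.
  destruct C; simpl; auto. intros s [[x ->]|[y [b [u ->]]]]; simpl; auto.
Qed.

Lemma inert_not_value : forall i, inert i -> ~ is_value i.
Proof. intros i H; destruct H; simpl; auto. Qed.

Lemma inert_plug : forall H s, is_H H -> atom s -> inert (plug_t H s) ->
  exists x, s = Var x /\ nv_t x (plug_t H s).
Proof.
  intros H s HH; induction HH as [|H t HH IH|i H Hi HH IH]; simpl; intros Ha Hin.
  - destruct Ha as [[x ->]|[y [b [u ->]]]].
    + exists x; simpl; auto.
    + inversion Hin as [|i f Hi Hf]; subst; try inversion Hi.
  - inversion Hin as [|i f Hi Hf]; subst. destruct (IH Ha Hi) as [x [-> Hn]].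
    exists x; split; [reflexivity| simpl; left; exact Hn].
  - inversion Hin as [|i' f Hi' Hf]; subst.
    inversion Hf as [v Hv|i0 Hi0]; subst.
    + exfalso; eapply atom_plug_not_value; eauto.
    + destruct (IH Ha Hi0) as [x [-> Hn]]. exists x; split; [reflexivity| simpl; right; exact Hn].
Qed.

Lemma H_unique : forall H1 s1 H2 s2, is_H H1 -> is_H H2 ->
  plug_t H1 s1 = plug_t H2 s2 -> atom s1 -> atom s2 ->
  (H1 = H2 /\ s1 = s2) \/ (exists x, s1 = Var x /\ nv_ctx x H2) \/
  (exists x, s2 = Var x /\ nv_ctx x H1).
Proof.
  intros H1 s1 H2 s2 HH1; revert H2 s2.
  induction HH1 as [|H1 t HH1 IH|i H1 Hi HH1 IH]; intros H2 s2 HH2 Heq A1 A2;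
    destruct HH2 as [|H2 t2 HH2|i2 H2 Hi2 HH2]; simpl in Heq.
  - subst; left; auto.
  - subst. exfalso. destruct A1 as [[x Hx]|[y [b [u Hx]]]]; [discriminate|].
    injection Hx as Hx _. eapply atom_plug_not_value; [exact A2|]. rewrite Hx; simpl; auto.
  - subst. exfalso. destruct A1 as [[x Hx]|[y [b [u Hx]]]]; [discriminate|].
    injection Hx as Hx _. subst. inversion Hi2.
  - subst. exfalso. destruct A2 as [[x Hx]|[y [b [u Hx]]]]; [discriminate|].
    injection Hx as Hx _. eapply atom_plug_not_value; [exact A1|]. rewrite Hx; simpl; auto.
  - injection Heq as Heq Ht; subst.
    destruct (IH H2 s2 HH2 Heq A1 A2) as [[-> ->]|[[x [-> Hx]]|[x [-> Hx]]]]; auto.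
    + right; left; exists x; split; auto.
    + right; right; exists x; split; auto.
  - injection Heq as Heq Ht; subst.
    destruct (inert_plug H1 s1 HH1 A1 Hi2) as [x [-> Hx]].
    right; left; exists x; split; auto; simpl; left; auto.
  - subst. exfalso. destruct A2 as [[x Hx]|[y [b [u Hx]]]]; [discriminate|].
    injection Hx as Hx _. subst. inversion Hi.
  - injection Heq as Ht Heq; subst.
    destruct (inert_plug H2 s2 HH2 A2 Hi) as [x [-> Hx]].
    right; right; exists x; split; auto; simpl; left; auto.
  - injection Heq as Ht Heq; subst.
    destruct (IH H2 s2 HH2 Heq A1 A2) as [[-> ->]|[[x [-> Hx]]|[x [-> Hx]]]]; auto.
    + right; left; exists x; split; auto; simpl; auto.
    + right; right; exists x; split; auto; simpl; auto.
Qed.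

Lemma ev_inv : forall V P s t E y u, evctx V P -> plug_term P s = (t, ESnoc E y u) ->
  (exists V' P', evctx V' P' /\ P = pctx_app P' y u /\ plug_term P' s = (t,E) /\
     ((V' y /\ inert u /\ forall z, V z <-> ((V' z /\ z <> y) \/ nv_t z u)) \/
      (~ V' y /\ forall z, V z <-> V' z))) \/
  (exists W P'' H, evctx W P'' /\ ~ W y /\ ~ In y (dom_pctx P'') /\ is_H H /\
     P = prog_app_ctx (t,E) y H /\ plug_term P'' (Var y) = (t,E) /\ u = plug_t H s /\
     forall z, V z <-> (W z \/ nv_ctx z H)).
Proof.
  intros V P s t E y u HP Heq.
  destruct HP as [H HH|V P x i HP Hx Hi|V P x t0 HP Hx|V P x H HP Hx Hd HH].
  - rewrite plug_term_base in Heq; discriminate.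
  - rewrite plug_term_app in Heq. unfold prog_app in Heq. injection Heq as E1 E2 E3 E4; subst x; subst u.
    left. exists V, P. split; auto. split; auto. split.
    + rewrite (surjective_pairing (plug_term P s)), E1, E2; auto.
    + left; split; auto; split; auto; tauto.
  - rewrite plug_term_app in Heq. unfold prog_app in Heq. injection Heq as E1 E2 E3 E4; subst x; subst u.
    left. exists V, P. split; auto. split; auto. split.
    + rewrite (surjective_pairing (plug_term P s)), E1, E2; auto.
    + right; split; auto; tauto.
  - rewrite plug_term_hole in Heq. injection Heq as E1 E2 E3 E4; subst x; subst u.
    right. exists V, P, H. repeat split; auto.
    + rewrite (surjective_pairing (plug_term P (Var y))), E1, E2; auto.
    + rewrite (surjective_pairing (plug_term P (Var y))), E1, E2; auto.
Qed.

Definition good (E : env) (s : term) : Prop :=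
  forall x, s = Var x -> forall u, In (x,u) (es_env E) -> is_value u.

Definition KeyStmt (E : env) : Prop := forall t V1 P1 s1 V2 P2 s2,
  evctx V1 P1 -> evctx V2 P2 ->
  plug_term P1 s1 = (t,E) -> plug_term P2 s2 = (t,E) ->
  atom s1 -> atom s2 -> good E s1 -> good E s2 ->
  (P1 = P2 /\ s1 = s2 /\ forall z, V1 z <-> V2 z) \/
  (exists x, s1 = Var x /\ V2 x) \/ (exists x, s2 = Var x /\ V1 x).

Lemma good_weak : forall E y u s, good (ESnoc E y u) s -> good E s.
Proof. intros E y u s G x Hx w Hw; eapply G; eauto; simpl; right; auto. Qed.

Lemma good_hole : forall P y t E, ~ In y (dom_pctx P) -> plug_term P (Var y) = (t,E) -> good E (Var y).
Proof.
  intros P y t E Hd Heq x Hx w Hw. injection Hx as ->. exfalso; apply Hd.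
  rewrite <- dom_plug with (s := Var x). rewrite Heq; simpl. eapply es_dom; eauto.
Qed.

Lemma caseB : forall E' t y u V1 V1' P1' s1 V2 W P'' H s2,
  KeyStmt E' ->
  evctx V1' P1' -> plug_term P1' s1 = (t,E') ->
  ((V1' y /\ inert u /\ forall z, V1 z <-> ((V1' z /\ z <> y) \/ nv_t z u)) \/
      (~ V1' y /\ forall z, V1 z <-> V1' z)) ->
  evctx W P'' -> ~ W y -> ~ In y (dom_pctx P'') -> is_H H ->
  plug_term P'' (Var y) = (t,E') -> u = plug_t H s2 ->
  (forall z, V2 z <-> (W z \/ nv_ctx z H)) ->
  atom s1 -> atom s2 -> good (ESnoc E' y u) s1 ->
  (exists x, s1 = Var x /\ V2 x) \/ (exists x, s2 = Var x /\ V1 x).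
Proof.
  intros E' t y u V1 V1' P1' s1 V2 W P'' H s2 IH HP1 E1 HV1 HW Hy Hd HH E2 Hu HV2 A1 A2 G1.
  destruct (IH t V1' P1' s1 W P'' (Var y) HP1 HW E1 E2 A1 (or_introl (ex_intro _ y eq_refl))
              (good_weak _ _ _ _ G1) (good_hole _ _ _ _ Hd E2))
    as [[-> [-> _]]|[[x [-> Hx]]|[x [Hx Hx2]]]].
  - exfalso. assert (Hv : is_value u) by (eapply G1; [reflexivity| simpl; left; reflexivity]).
    subst u. eapply atom_plug_not_value; eauto.
  - left; exists x; split; auto; apply HV2; left; auto.
  - injection Hx as <-. destruct HV1 as [[_ [Hi HV1]]|[Hn _]]; [|contradiction].
    subst u. destruct (inert_plug H s2 HH A2 Hi) as [z [-> Hz]].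
    right; exists z; split; auto. apply HV1; right; auto.
Qed.

Lemma key : forall E, KeyStmt E.
Proof.
  induction E as [|E' IH y u]; intros t V1 P1 s1 V2 P2 s2 HP1 HP2 E1 E2 A1 A2 G1 G2.
  - destruct HP1 as [H1 HH1|V P x i HP Hx Hi|V P x t0 HP Hx|V P x H HP Hx Hd HH];
      try (rewrite plug_term_app in E1; unfold prog_app in E1; discriminate);
      try (rewrite plug_term_hole in E1; discriminate).
    destruct HP2 as [H2 HH2|V P x i HP Hx Hi|V P x t0 HP Hx|V P x H HP Hx Hd HH];
      try (rewrite plug_term_app in E2; unfold prog_app in E2; discriminate);
      try (rewrite plug_term_hole in E2; discriminate).
    rewrite plug_term_base in E1, E2. injection E1 as E1. injection E2 as E2.
    rewrite <- E2 in E1.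
    destruct (H_unique H1 s1 H2 s2 HH1 HH2 E1 A1 A2) as [[-> ->]|[[x [-> Hx]]|[x [-> Hx]]]].
    + left; split; auto; split; auto; tauto.
    + right; left; exists x; auto.
    + right; right; exists x; auto.
  - destruct (ev_inv _ _ _ _ _ _ _ HP1 E1) as
        [[V1' [P1' [HP1' [-> [E1' HV1]]]]]|[W1 [P1'' [H1 [HW1 [Hy1 [Hd1 [HH1 [-> [E1' [Hu1 HV1]]]]]]]]]]];
    destruct (ev_inv _ _ _ _ _ _ _ HP2 E2) as
        [[V2' [P2' [HP2' [-> [E2' HV2]]]]]|[W2 [P2'' [H2 [HW2 [Hy2 [Hd2 [HH2 [-> [E2' [Hu2 HV2]]]]]]]]]]].
    +
      destruct (IH t V1' P1' s1 V2' P2' s2 HP1' HP2' E1' E2' A1 A2 (good_weak _ _ _ _ G1) (good_weak _ _ _ _ G2))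
        as [[-> [-> HV]]|[[x [-> Hx]]|[x [-> Hx]]]].
      * left; split; auto; split; auto. intro z.
        destruct HV1 as [[Hy1 [Hi1 HV1]]|[Hy1 HV1]], HV2 as [[Hy2 [Hi2 HV2]]|[Hy2 HV2]];
          rewrite HV1, HV2; try (exfalso; apply Hy1; apply HV; auto; fail);
          try (exfalso; apply Hy2; apply HV; auto; fail); rewrite HV; tauto.
      * right; left; exists x; split; auto.
        destruct HV2 as [[Hy2 [Hi2 HV2]]|[Hy2 HV2]]; apply HV2; auto.
        destruct (Nat.eq_dec x y) as [->|Hne]; [|left; auto].
        exfalso. assert (Hv : is_value u) by (eapply G1; [reflexivity| simpl; left; reflexivity]).
        eapply inert_not_value; eauto.
      * right; right; exists x; split; auto.
        destruct HV1 as [[Hy1 [Hi1 HV1]]|[Hy1 HV1]]; apply HV1; auto.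
        destruct (Nat.eq_dec x y) as [->|Hne]; [|left; auto].
        exfalso. assert (Hv : is_value u) by (eapply G2; [reflexivity| simpl; left; reflexivity]).
        eapply inert_not_value; eauto.
    + right. exact (caseB E' t y u V1 V1' P1' s1 V2 W2 P2'' H2 s2 IH HP1' E1' HV1 HW2 Hy2 Hd2 HH2 E2' Hu2 HV2 A1 A2 G1).
    + right. destruct (caseB E' t y u V2 V2' P2' s2 V1 W1 P1'' H1 s1 IH HP2' E2' HV2 HW1 Hy1 Hd1 HH1 E1' Hu1 HV1 A2 A1 G2)
        as [K|K]; [right|left]; exact K.
    + destruct (IH t W1 P1'' (Var y) W2 P2'' (Var y) HW1 HW2 E1' E2'
                  (or_introl (ex_intro _ y eq_refl)) (or_introl (ex_intro _ y eq_refl))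
                  (good_hole _ _ _ _ Hd1 E1') (good_hole _ _ _ _ Hd2 E2'))
        as [[_ [_ HW]]|[[x [Hx Hx2]]|[x [Hx Hx2]]]];
        [| injection Hx as <-; contradiction| injection Hx as <-; contradiction].
      rewrite Hu1 in Hu2.
      destruct (H_unique H1 s1 H2 s2 HH1 HH2 Hu2 A1 A2) as [[-> ->]|[[x [-> Hx]]|[x [-> Hx]]]].
      * left; split; auto; split; auto. intro z; rewrite HV1, HV2, HW; tauto.
      * right; left; exists x; split; auto; apply HV2; right; auto.
      * right; right; exists x; split; auto; apply HV1; right; auto.
Qed.

Lemma raw_inv : forall p q, ond_raw p q ->
  (exists V P x t u, evctx V P /\ p = plug_term P (App (Lam x t) u) /\ q = plug P (t, ESnoc Eps x u)) \/
  (exists V P x v v', evctx V P /\ lookup P x v /\ is_value v /\ aeq [] v v' /\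
     p = plug_term P (Var x) /\ q = plug_term P v').
Proof.
  intros p q H; destruct H as [V P x t u HP|V P x v v' HP Hl Hv Ha].
  - left; exists V, P, x, t, u; auto.
  - right; exists V, P, x, v, v'; repeat split; auto.
Qed.

Lemma needed_unbound : forall p V P s x P' v s', well_named p -> evctx V P -> V x ->
  p = plug_term P s -> lookup P' x v -> p = plug_term P' s' -> False.
Proof.
  intros p V P s x P' v s' WN HP Hx E1 Hl E2.
  assert (Hf : fv_prog x p) by (rewrite E1; eapply ev_fv; eauto).
  eapply wn_bound_not_free; eauto. rewrite E2. apply es_plug. exact Hl.
Qed.

Lemma good_lookup : forall p P x v, well_named p -> p = plug_term P (Var x) ->
  lookup P x v -> is_value v -> good (snd p) (Var x).
Proof.
  intros p P x v WN E Hl Hv y Hy u Hu. injection Hy as <-.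
  assert (Hin : In (x,v) (es_env (snd p))) by (rewrite E; apply es_plug; exact Hl).
  rewrite (es_uniq _ _ _ _ (wn_nodup_env _ WN) Hu Hin); exact Hv.
Qed.

Lemma good_beta : forall E x t u, good E (App (Lam x t) u).
Proof. intros E x t u y Hy; discriminate. Qed.

Lemma atom_beta : forall x t u, atom (App (Lam x t) u).
Proof. intros; right; eauto. Qed.

Lemma atom_var : forall x, atom (Var x).
Proof. intros; left; eauto. Qed.

Lemma raw_det : forall p q1 q2, well_named p -> ond_raw p q1 -> ond_raw p q2 -> aeq_prog q1 q2.
Proof.
  intros p q1 q2 WN H1 H2.
  apply raw_inv in H1; apply raw_inv in H2.
  assert (Kp : forall P s, p = plug_term P s -> plug_term P s = (fst p, snd p))
    by (intros; subst; apply surjective_pairing).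
  destruct H1 as [[V1 [P1 [x1 [t1 [u1 [HP1 [Ep1 Eq1]]]]]]]|[V1 [P1 [x1 [v1 [w1 [HP1 [L1 [Hv1 [Ha1 [Ep1 Eq1]]]]]]]]]]];
  destruct H2 as [[V2 [P2 [x2 [t2 [u2 [HP2 [Ep2 Eq2]]]]]]]|[V2 [P2 [x2 [v2 [w2 [HP2 [L2 [Hv2 [Ha2 [Ep2 Eq2]]]]]]]]]]].
  - destruct (key _ _ _ _ _ _ _ _ HP1 HP2 (Kp _ _ Ep1) (Kp _ _ Ep2) (atom_beta _ _ _) (atom_beta _ _ _)
                (good_beta _ _ _ _) (good_beta _ _ _ _)) as [[-> [Hs _]]|[[x [Hx _]]|[x [Hx _]]]]; try discriminate.
    injection Hs as -> -> ->. subst. apply aeq_prog_refl.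
  - destruct (key _ _ _ _ _ _ _ _ HP1 HP2 (Kp _ _ Ep1) (Kp _ _ Ep2) (atom_beta _ _ _) (atom_var _)
                (good_beta _ _ _ _) (good_lookup _ _ _ _ WN Ep2 L2 Hv2)) as [[-> [Hs _]]|[[x [Hx _]]|[x [Hx Hx2]]]]; try discriminate.
    injection Hx as <-. exfalso; exact (needed_unbound p V1 P1 _ x2 P2 v2 _ WN HP1 Hx2 Ep1 L2 Ep2).
  - destruct (key _ _ _ _ _ _ _ _ HP1 HP2 (Kp _ _ Ep1) (Kp _ _ Ep2) (atom_var _) (atom_beta _ _ _)
                (good_lookup _ _ _ _ WN Ep1 L1 Hv1) (good_beta _ _ _ _)) as [[-> [Hs _]]|[[x [Hx Hx2]]|[x [Hx _]]]]; try discriminate.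
    injection Hx as <-. exfalso; exact (needed_unbound p V2 P2 _ x1 P1 v1 _ WN HP2 Hx2 Ep2 L1 Ep1).
  - destruct (key _ _ _ _ _ _ _ _ HP1 HP2 (Kp _ _ Ep1) (Kp _ _ Ep2) (atom_var _) (atom_var _)
                (good_lookup _ _ _ _ WN Ep1 L1 Hv1) (good_lookup _ _ _ _ WN Ep2 L2 Hv2))
      as [[-> [Hs _]]|[[x [Hx Hx2]]|[x [Hx Hx2]]]].
    + injection Hs as <-. subst q1 q2.
      assert (v1 = v2).
      { eapply es_uniq; [apply (wn_nodup_env _ WN)| |];
        [rewrite Ep1; apply es_plug; exact L1| rewrite Ep2; apply es_plug; exact L2]. }
      subst v2. apply aeq_plug_term.
      apply aeq_sym in Ha1; simpl in Ha1.
      eapply aeq_trans; [constructor| exact Ha1| exact Ha2].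
    + injection Hx as <-. exfalso; exact (needed_unbound p V2 P2 _ x1 P1 v1 _ WN HP2 Hx2 Ep2 L1 Ep1).
    + injection Hx as <-. exfalso; exact (needed_unbound p V1 P1 _ x2 P2 v2 _ WN HP1 Hx2 Ep1 L2 Ep2).
Qed.

Lemma fv_beta_inner : forall C x t u w,
  fv_env w (plug_t C t) (ESnoc Eps x u) -> fv_t w (plug_t C (App (Lam x t) u)).
Proof.
  intros C x t u w H; simpl in H. destruct H as [[H Hn]|H].
  - destruct (plug_fv1 C t (App (Lam x t) u) w H) as [K|K]; auto.
    apply plug_fv2; simpl; left; split; auto.
  - apply plug_fv2; simpl; right; auto.
Qed.

Lemma fv_om : forall P x t u z, fv_prog z (plug P (t, ESnoc Eps x u)) ->
  fv_prog z (plug_term P (App (Lam x t) u)).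
Proof.
  intros [C E|u0 G] x t u z; unfold fv_prog, plug_term, plug; simpl.
  - intros H. eapply fv_env_cat_mono; [|exact H].
    intros w Hw; simpl. apply fv_beta_inner; auto.
  - revert z; induction G as [E y C|G IH w s]; intros z; simpl.
    + intros [[[[H Hn]|H] Hx]|H]; auto.
      * right; apply fv_beta_inner; simpl; left; auto.
      * right; apply fv_beta_inner; simpl; right; auto.
    + intros [[H Hn]|H]; auto.
Qed.

Lemma fv_plug_g_mono : forall (Q : var -> Prop) u0 G a b z,
  (forall w, fv_t w a -> fv_t w b \/ Q w) ->
  fv_prog z (plug_g u0 G (a,Eps)) -> fv_prog z (plug_g u0 G (b,Eps)) \/ Q z.
Proof.
  intros Q u0 G a b z Hab. unfold fv_prog. revert z; induction G as [E y C|G IH w s]; intros z; simpl.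
  - intros [[H Hn]|H]; auto.
    assert (K : forall w, fv_t w (plug_t C a) -> fv_t w (plug_t C b) \/ Q w).
    { intros w Hw. destruct (plug_fv1 C a b w Hw) as [K|K]; auto.
      destruct (Hab w K); auto. left; apply plug_fv2; auto. }
    destruct (K z H); auto.
  - intros [[H Hn]|H]; auto. destruct (IH z H); auto.
Qed.

Lemma es_g_dom : forall G x v, In (x,v) (es_g G) -> In x (dom_g G).
Proof.
  induction G as [E0 y0 C0|G0 IH y0 s0]; simpl; intros x v H.
  - right; eapply es_dom; eauto.
  - destruct H as [H|H]; [inversion H; subst; left; auto| right; eauto].
Qed.

Lemma fv_oe_g : forall u0 G x v s z, NoDup (dom_g G) -> In (x,v) (es_g G) ->
  ~ fv_prog x (plug_g u0 G (Var x, Eps)) -> (forall w, fv_t w s -> fv_t w v) ->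
  fv_prog z (plug_g u0 G (s, Eps)) -> fv_prog z (plug_g u0 G (Var x, Eps)).
Proof.
  intros u0 G; induction G as [E y C|G IH w s0]; intros x v s z ND Hin Hnf Hs Hz.
  - exfalso; apply Hnf. unfold fv_prog; simpl. right. apply plug_fv2; simpl; auto.
  - simpl in *. inversion ND as [|? ? Hw ND']; subst.
    unfold fv_prog in *; simpl in *.
    destruct Hin as [Hin|Hin].
    + inversion Hin; subst.
      destruct Hz as [[Hz Hn]|Hz]; auto.
      destruct (fv_plug_g_mono (fun w => fv_t w v) u0 G s (Var x) z) as [K|K]; auto.
    + assert (Hxw : x <> w) by (intro; subst; apply Hw; eapply es_g_dom; eauto).
      destruct Hz as [[Hz Hn]|Hz]; auto.
      left; split; auto. eapply IH; eauto.
Qed.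

Lemma fv_oe_env : forall C E x v s z, In (x,v) (es_env E) -> (forall w, fv_t w s -> fv_t w v) ->
  fv_env z (plug_t C s) E -> fv_env z (plug_t C (Var x)) E.
Proof.
  induction E as [|E IH y u]; simpl; intros x v s z Hin Hs Hz; [contradiction|].
  destruct Hin as [Hin|Hin].
  - inversion Hin; subst. destruct Hz as [[Hz Hn]|Hz]; auto.
    destruct (fv_env_mono (fun w => fv_t w v) (plug_t C s) (plug_t C (Var x)) E z) as [K|K]; auto.
    intros w Hw. destruct (plug_fv1 C s (Var x) w Hw); auto.
  - destruct Hz as [[Hz Hn]|Hz]; auto. left; split; eauto.
Qed.

Lemma fv_step : forall p q, well_named p -> ond_raw p q -> forall z, fv_prog z q -> fv_prog z p.
Proof.
  intros p q WN H. destruct H as [V P x t u HP|V P x v v' HP Hl Hv Ha]; intros z Hz.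
  - apply fv_om; auto.
  - assert (Hs : forall w, fv_t w v' -> fv_t w v) by (intros; eapply aeq_closed_fv; eauto).
    destruct P as [C E|u0 G].
    + unfold fv_prog, plug_term, plug in *; simpl in *. rewrite env_cat_Eps_l in *.
      eapply fv_oe_env; eauto.
    + unfold plug_term, plug in *. eapply fv_oe_g; eauto.
      * rewrite <- (dom_plug_g u0 G (Var x)). apply nodup_dom. apply (wn_nodup_env _ WN).
      * eapply wn_bound_not_free; eauto. apply (es_plug (PEnv u0 G) (Var x) x v). exact Hl.
Qed.

Fixpoint rn_t (f : var -> var) (t : term) : term :=
  match t with
  | Var x => Var (f x)
  | Lam x b => Lam (f x) (rn_t f b)
  | App a b => App (rn_t f a) (rn_t f b)
  end.
Fixpoint rn_env (f : var -> var) (E : env) : env :=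
  match E with
  | Eps => Eps
  | ESnoc E0 x u => ESnoc (rn_env f E0) (f x) (rn_t f u)
  end.
Fixpoint rn_ctx (f : var -> var) (C : tctx) : tctx :=
  match C with
  | Hole => Hole
  | CAppL C0 u => CAppL (rn_ctx f C0) (rn_t f u)
  | CAppR u C0 => CAppR (rn_t f u) (rn_ctx f C0)
  end.
Fixpoint rn_g (f : var -> var) (G : gctx) : gctx :=
  match G with
  | GHere E x C => GHere (rn_env f E) (f x) (rn_ctx f C)
  | GSnoc G0 x u => GSnoc (rn_g f G0) (f x) (rn_t f u)
  end.
Definition rn_p (f : var -> var) (P : pctx) : pctx :=
  match P with
  | PTerm C E => PTerm (rn_ctx f C) (rn_env f E)
  | PEnv t G => PEnv (rn_t f t) (rn_g f G)
  end.
Definition rn_prog (f : var -> var) (p : prog) : prog := (rn_t f (fst p), rn_env f (snd p)).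

Section Rn.
Variable f g : var -> var.
Hypothesis fK : forall x, g (f x) = x.
Hypothesis gK : forall x, f (g x) = x.

Lemma f_inj : forall x y, f x = f y -> x = y.
Proof. intros x y H; rewrite <- (fK x), <- (fK y), H; reflexivity. Qed.

Lemma rn_plug_t : forall C t, rn_t f (plug_t C t) = plug_t (rn_ctx f C) (rn_t f t).
Proof. induction C; simpl; intros; f_equal; auto. Qed.

Lemma rn_env_cat : forall E1 E2, rn_env f (env_cat E1 E2) = env_cat (rn_env f E1) (rn_env f E2).
Proof. induction E2; simpl; f_equal; auto. Qed.

Lemma rn_plug : forall P p, rn_prog f (plug P p) = plug (rn_p f P) (rn_prog f p).
Proof.
  intros [C E|u G] p; unfold rn_prog; simpl.
  - rewrite rn_plug_t, rn_env_cat; reflexivity.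
  - induction G as [E x C|G IH x s]; simpl.
    + rewrite rn_env_cat; simpl; rewrite rn_plug_t; reflexivity.
    + unfold prog_app; rewrite <- IH; reflexivity.
Qed.

Lemma rn_plug_term : forall P t, rn_prog f (plug_term P t) = plug_term (rn_p f P) (rn_t f t).
Proof. intros; unfold plug_term; rewrite rn_plug; reflexivity. Qed.

Lemma rn_pctx_app : forall P x u, rn_p f (pctx_app P x u) = pctx_app (rn_p f P) (f x) (rn_t f u).
Proof. destruct P; reflexivity. Qed.

Lemma rn_prog_app_ctx : forall p x H, rn_p f (prog_app_ctx p x H) = prog_app_ctx (rn_prog f p) (f x) (rn_ctx f H).
Proof. reflexivity. Qed.

Lemma rn_es : forall P x v, In (x,v) (es_pctx P) -> In (f x, rn_t f v) (es_pctx (rn_p f P)).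
Proof.
  assert (KE : forall E x v, In (x,v) (es_env E) -> In (f x, rn_t f v) (es_env (rn_env f E))).
  { induction E as [|E0 IH0 y0 u0]; simpl; intros x v H; auto. destruct H as [H|H]; [inversion H; subst; left; auto| right; auto]. }
  intros [C E|u G]; simpl; auto.
  induction G as [E0 y0 C0|G0 IH0 y0 s0]; simpl; intros x v H; auto. destruct H as [H|H]; [inversion H; subst; left; auto| right; auto].
Qed.

Lemma rn_dom : forall P x, In (f x) (dom_pctx (rn_p f P)) -> In x (dom_pctx P).
Proof.
  assert (KE : forall E x, In (f x) (dom_env (rn_env f E)) -> In x (dom_env E)).
  { induction E as [|E0 IH0 y0 u0]; simpl; intros x H; auto. destruct H as [H|H]; [left; apply f_inj; auto| right; auto]. }
  intros [C E|u G]; simpl; auto.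
  induction G as [E0 y0 C0|G0 IH0 y0 s0]; simpl; intros x H; destruct H as [H|H]; try (left; apply f_inj; auto; fail); right; auto.
Qed.

Lemma rn_nv_t : forall z t, nv_t z (rn_t f t) <-> nv_t (g z) t.
Proof.
  induction t; simpl; try tauto.
  split; intro H; [subst; apply fK| rewrite <- H; symmetry; apply gK].
Qed.

Lemma rn_nv_ctx : forall z C, nv_ctx z (rn_ctx f C) <-> nv_ctx (g z) C.
Proof.
  induction C; simpl; try tauto.
  rewrite rn_nv_t, IHC; tauto.
Qed.

Lemma rn_value : forall t, is_value t -> is_value (rn_t f t).
Proof. destruct t; simpl; auto. Qed.

Lemma rn_inert : forall t, (inert t -> inert (rn_t f t)) /\ (fireball t -> fireball (rn_t f t)).
Proof.
  induction t as [x|x b IH|a IHa b IHb]; simpl; split; intro H.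
  - constructor.
  - apply fb_inert; constructor.
  - inversion H.
  - apply fb_value; simpl; auto.
  - inversion H; subst. constructor; [apply IHa| apply IHb]; auto.
  - inversion H as [v Hv|i Hi]; subst; [simpl in Hv; contradiction|].
    apply fb_inert. inversion Hi; subst. constructor; [apply IHa| apply IHb]; auto.
Qed.

Lemma rn_isH : forall H, is_H H -> is_H (rn_ctx f H).
Proof.
  induction 1; simpl; constructor; auto. apply rn_inert; auto.
Qed.

Lemma evctx_ext : forall V W P, evctx V P -> (forall z, V z <-> W z) -> evctx W P.
Proof.
  intros V W P H E.
  assert (V = W) by (apply functional_extensionality; intro z; apply propositional_extensionality; auto).
  subst; auto.
Qed.

Lemma rn_evctx : forall V P, evctx V P -> evctx (fun z => V (g z)) (rn_p f P).
Proof.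
  induction 1 as [H HH|V P x i HP IH Hx Hi|V P x t HP IH Hx|V P x H HP IH Hx Hd HH].
  - simpl. eapply evctx_ext; [apply ev_base, rn_isH; auto|].
    intro z; simpl; apply rn_nv_ctx.
  - rewrite rn_pctx_app. eapply evctx_ext; [apply ev_inert; [exact IH| cbv beta; rewrite fK; exact Hx| apply rn_inert; auto]|].
    intro z; simpl. rewrite rn_nv_t. split; intros [[A B]|A]; auto; left; split; auto.
    + intro; subst; apply B; auto.
    + intro; subst; apply B; auto.
  - rewrite rn_pctx_app. apply ev_garbage; auto. cbv beta; rewrite fK; auto.
  - rewrite rn_prog_app_ctx, rn_plug_term. simpl.
    eapply evctx_ext; [apply ev_hole; [exact IH| cbv beta; rewrite fK; exact Hx| | apply rn_isH; auto]|].
    + intro Hin; apply Hd; apply rn_dom; auto.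
    + intro z; simpl; rewrite rn_nv_ctx; tauto.
Qed.

Definition fpair (q : var * var) : var * var := (f (fst q), f (snd q)).

Lemma rn_aeq_var : forall G x y, aeq_var G x y -> aeq_var (map fpair G) (f x) (f y).
Proof.
  induction G as [|[a b] G IH]; simpl; intros x y H; [subst; auto|].
  destruct H as [[-> ->]|[H1 [H2 H3]]]; [left; auto| right; split; [|split]; auto].
  - intro E; apply H1; apply f_inj; auto.
  - intro E; apply H2; apply f_inj; auto.
Qed.

Lemma rn_aeq : forall t G t', aeq G t t' -> aeq (map fpair G) (rn_t f t) (rn_t f t').
Proof.
  induction t as [x|x b IH|a IHa b IHb]; intros G t' H; destruct t'; simpl in *; try contradiction.
  - apply rn_aeq_var; auto.
  - apply (IH ((x,v)::G)); auto.
  - destruct H; split; auto.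
Qed.

Lemma rn_raw : forall p q, ond_raw p q -> ond_raw (rn_prog f p) (rn_prog f q).
Proof.
  intros p q H; destruct H as [V P x t u HP|V P x v v' HP Hl Hv Ha].
  - rewrite rn_plug_term, rn_plug. simpl. unfold rn_prog; simpl.
    eapply om_step; apply rn_evctx; eauto.
  - rewrite !rn_plug_term. simpl. eapply oe_step.
    + apply rn_evctx; eauto.
    + unfold lookup in *; apply rn_es; eauto.
    + apply rn_value; auto.
    + apply (rn_aeq _ [] _ Ha).
Qed.

Lemma R2_t : forall t G, (forall z, fv_t z t -> aeq_var G z (f z)) -> aeq G t (rn_t f t).
Proof.
  induction t as [x|x b IH|a IHa b IHb]; intros G H; simpl in *.
  - apply H; auto.
  - apply IH. intros z Hz. simpl. destruct (Nat.eq_dec z x) as [->|Hne]; [left; auto|].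
    right; split; auto; split; [intro E; apply Hne; apply f_inj; auto| apply H; auto].
  - split; [apply IHa| apply IHb]; intros z Hz; apply H; auto.
Qed.

Lemma R2_env : forall E t G, (forall z, fv_env z t E -> aeq_var G z (f z)) ->
  aeq_env G t E (rn_t f t) (rn_env f E).
Proof.
  induction E as [|E IH x u]; intros t G H; simpl in *.
  - apply R2_t; auto.
  - split; [apply R2_t; intros z Hz; apply H; auto|].
    apply IH. intros z Hz. simpl. destruct (Nat.eq_dec z x) as [->|Hne]; [left; auto|].
    right; split; auto; split; [intro E0; apply Hne; apply f_inj; auto| apply H; auto].
Qed.

Lemma R2_prog : forall p, (forall z, fv_prog z p -> f z = z) -> aeq_prog p (rn_prog f p).
Proof.
  intros p H. unfold aeq_prog, rn_prog; simpl. apply R2_env.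
  intros z Hz; simpl; symmetry; apply H; auto.
Qed.

End Rn.

(* R1: alpha-equivalent programs are related by the renaming mapping binders *)
Lemma R1_var : forall (f : var -> var) G x y, aeq_var G x y -> (forall a b, In (a,b) G -> f a = b) ->
  (~ In x (map fst G) -> f x = x) -> f x = y.
Proof.
  induction G as [|[a b] G IH]; simpl; intros x y H HG Hx.
  - subst. apply Hx. auto.
  - destruct H as [[-> ->]|[Hxa [Hyb H]]].
    + apply HG; left; reflexivity.
    + apply IH; auto. intros Hn. apply Hx. intros [Heq|Hin]; [congruence| contradiction].
Qed.

Lemma app_split : forall (A : Type) (l1 l2 l1' l2' : list A), l1 ++ l2 = l1' ++ l2' ->
  length l1 = length l1' -> l1 = l1' /\ l2 = l2'.
Proof.
  induction l1; destruct l1'; simpl; intros l2' H Hl; try discriminate; auto.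
  injection H as -> H. injection Hl as Hl. destruct (IHl1 _ _ _ H Hl); subst; auto.
Qed.

Lemma R1_t : forall f t G t', aeq G t t' -> (forall a b, In (a,b) G -> f a = b) ->
  (forall z, fv_t z t -> ~ In z (map fst G) -> f z = z) -> map f (bv_t t) = bv_t t' -> rn_t f t = t'.
Proof.
  induction t as [x|x b IH|a IHa b IHb]; intros G t' H HG Hf Hb; destruct t' as [y|y b'|a' b']; simpl in *; try contradiction.
  - f_equal. eapply R1_var; eauto.
  - injection Hb as Hxy Hbb. subst y. f_equal. apply (IH ((x,f x)::G)); auto.
    + intros a0 b0 [E|E]; [inversion E; subst; auto| auto].
    + intros z Hz Hn. apply Hf; [split; auto|].
      * intro; subst; apply Hn; left; reflexivity.
      * intro; apply Hn; right; auto.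
  - destruct H as [H1 H2]. rewrite map_app in Hb.
    destruct (app_split _ _ _ _ _ Hb) as [K1 K2]; [rewrite length_map; eapply aeq_len; eauto|].
    f_equal; [eapply IHa| eapply IHb]; eauto.
Qed.

Lemma R1_env : forall f E t G t' E', aeq_env G t E t' E' -> (forall a b, In (a,b) G -> f a = b) ->
  (forall z, fv_env z t E -> ~ In z (map fst G) -> f z = z) ->
  map f (bv_env E) = bv_env E' -> map f (bv_t t) = bv_t t' -> rn_t f t = t' /\ rn_env f E = E'.
Proof.
  induction E as [|E IH x u]; intros t G t' E' H HG Hf Hb Ht; destruct E' as [|E' y u']; simpl in *; try contradiction.
  - split; auto. eapply R1_t; eauto.
  - destruct H as [H1 H2]. injection Hb as Hxy Hb. rewrite map_app in Hb.
    destruct (app_split _ _ _ _ _ Hb) as [K1 K2]; [rewrite length_map; eapply aeq_len; eauto|].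
    subst y.
    destruct (IH t ((x,f x)::G) t' E' H2) as [A1 A2]; auto.
    + intros a0 b0 [E0|E0]; [inversion E0; subst; auto| auto].
    + intros z Hz Hn. apply Hf; [left; split; auto|].
      * intro; subst; apply Hn; left; reflexivity.
      * intro; apply Hn; right; auto.
    + split; auto. rewrite A2. f_equal. eapply R1_t; eauto.
Qed.

Definition swp (a b z : var) : var := if Nat.eqb z a then b else if Nat.eqb z b then a else z.

Lemma swp_inv : forall a b z, swp a b (swp a b z) = z.
Proof.
  intros a b z; unfold swp.
  destruct (Nat.eqb_spec z a); [|destruct (Nat.eqb_spec z b)];
  repeat (match goal with |- context [Nat.eqb ?x ?y] => destruct (Nat.eqb_spec x y) end); congruence.
Qed.

Lemma swp_other : forall a b z, z <> a -> z <> b -> swp a b z = z.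
Proof.
  intros a b z H1 H2; unfold swp.
  destruct (Nat.eqb_spec z a); [contradiction|]. destruct (Nat.eqb_spec z b); [contradiction|]. auto.
Qed.

Lemma swp_a : forall a b, swp a b a = b.
Proof. intros; unfold swp; rewrite Nat.eqb_refl; auto. Qed.

Lemma swp_b : forall a b, swp a b b = a.
Proof. intros; unfold swp. destruct (Nat.eqb_spec b a); [auto| rewrite Nat.eqb_refl; auto]. Qed.

Lemma perm_exists : forall X Y : list var, NoDup X -> NoDup Y -> length X = length Y ->
  exists f g : var -> var, (forall x, g (f x) = x) /\ (forall x, f (g x) = x) /\ map f X = Y /\
    (forall z, ~ In z X -> ~ In z Y -> f z = z).
Proof.
  induction X as [|x X IH]; intros Y NX NY Hl; destruct Y as [|y Y]; simpl in Hl; try discriminate.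
  - exists (fun z => z), (fun z => z); repeat split; auto.
  - injection Hl as Hl. inversion NX as [|? ? Hx NX']; inversion NY as [|? ? Hy NY']; subst.
    destruct (IH Y NX' NY' Hl) as [f [g [fK [gK [Hm Hfix]]]]].
    exists (fun z => swp y (f x) (f z)), (fun z => g (swp y (f x) z)).
    split; [intro z; rewrite swp_inv; auto|].
    split; [intro z; rewrite gK, swp_inv; auto|].
    split.
    + simpl. rewrite swp_b. f_equal. rewrite <- Hm. apply map_ext_in.
      intros a Ha. apply swp_other.
      * intro E. apply Hy. rewrite <- E, <- Hm. apply in_map; auto.
      * intro E. apply (f_inj f g fK) in E. subst; contradiction.
    + intros z Hz1 Hz2. rewrite (Hfix z); [| intro; apply Hz1; right; auto| intro; apply Hz2; right; auto].
      apply swp_other; [intro; apply Hz2; left; auto|].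
      intro E. rewrite <- (Hfix z) in E; [| intro; apply Hz1; right; auto| intro; apply Hz2; right; auto].
      apply (f_inj f g fK) in E. apply Hz1; left; auto.
Qed.

Theorem mainTheorem2 (p q q' : prog) :
  ond p q -> ond p q' -> aeq_prog q q'.
Proof.
  intros [p0 [q0 [A0 [W0 [S0 B0]]]]] [p1 [q1 [A1 [W1 [S1 B1]]]]].
  assert (A01 : aeq_prog p0 p1) by (eapply aeq_prog_trans; [apply aeq_prog_sym; exact A0| exact A1]).
  destruct (perm_exists (bv_prog p0) (bv_prog p1) (proj1 W0) (proj1 W1) (aeq_prog_len _ _ A01))
    as [f [g [fK [gK [Hm Hfix]]]]].
  assert (Hfv : forall z, fv_prog z p0 -> f z = z).
  { intros z Hz. apply Hfix.
    - intro Hin; apply (proj2 W0 z Hin); auto.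
    - intro Hin; apply (proj2 W1 z Hin). eapply aeq_prog_fv; eauto. }
  assert (Hr : rn_prog f p0 = p1).
  { unfold aeq_prog, bv_prog in *. destruct p0 as [t0 E0], p1 as [t1 E1]; simpl in *.
    rewrite map_app in Hm.
    destruct (app_split _ _ _ _ _ Hm) as [K1 K2].
    { rewrite length_map. eapply (proj1 (aeq_env_len _ _ _ _ _ A01)). }
    destruct (R1_env f E0 t0 [] t1 E1 A01) as [R1 R2]; auto.
    - intros a b [].
    - unfold rn_prog; simpl; rewrite R1, R2; auto. }
  assert (S1' : ond_raw p1 (rn_prog f q0)) by (rewrite <- Hr; apply (rn_raw f g fK); auto).
  assert (D : aeq_prog (rn_prog f q0) q1) by (eapply raw_det; eauto).
  assert (E : aeq_prog q0 (rn_prog f q0)).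
  { apply (R2_prog f g fK). intros z Hz. apply Hfv. eapply fv_step; eauto. }
  eapply aeq_prog_trans; [apply aeq_prog_sym; exact B0|].
  eapply aeq_prog_trans; [exact E|].
  eapply aeq_prog_trans; [exact D| exact B1].
Qed.
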